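(* Let $\phi:\mathbf{R}^n\to\mathbf{R}$ be a uniformly convex norm of class $\mathcal{C}^2$ on $\mathbf{R}^n\setminus\{0\}$, $K\subseteq\mathbf{R}^n$ closed, $0<s<t<\infty$, $1<\lambda<\infty$, and $K_{\lambda,s,t}=\{x:\rho^\phi_K(x)\ge\lambda,\ s\le\delta^\phi_K(x)\le t\}$. Then there exists $\Gamma\in\mathbf{R}$ depending only on $s,t,\lambda,\phi$ such that $$\phi(\xi^\phi_K(a)-y)\le\Gamma\,\phi(a-b)$$ whenever $a\in K_{\lambda,s,t}$, $b\in\mathbf{R}^n$, $y\in\xi^\phi_K(b)$ and $\delta^\phi_K(b)\le t$. In particular $\xi^\phi_K|K_{\lambda,s,t}$ is Lipschitz continuous.
   Context: A norm $\phi$ on $\mathbf{R}^n$ is uniformly convex if there is $\gamma>0$ such that $x\mapsto\phi(x)-\gamma|x|$ is convex. For closed $K$: $\delta^\phi_K(x)=\inf\{\phi(y-x):y\in K\}$; $\xi^\phi_K(x)=K\cap\{w:\phi(x-w)=\delta^\phi_K(x)\}$ (on $K_{\lambda,s,t}$ this set is a singleton, identified with its element); $\rho^\phi_K(x)=\sup\bigl(\mathbf{R}\cap\{s':\delta^\phi_K(w+s'(x-w))=s'\delta^\phi_K(x)\}\bigr)$ for any $w\in\xi^\phi_K(x)$ (independent of the choice of $w$). *)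

(* Defs.v *)
From HB Require Import structures.
From mathcomp Require Import all_boot all_order all_algebra.
From mathcomp Require Import all_classical all_reals all_analysis.
Set Implicit Arguments. Unset Strict Implicit. Unset Printing Implicit Defensive.
Import Order.TTheory GRing.Theory Num.Theory.
Import numFieldNormedType.Exports.
Local Open Scope classical_set_scope.
Local Open Scope ring_scope.

Section Defs.
Variables (R : realType) (n : nat).
Notation V := 'rV[R]_n.

Definition eucl (x : V) : R := Num.sqrt (\sum_(i < n) x ord0 i ^+ 2).

Definition is_norm (phi : V -> R) : Prop :=
  [/\ forall x y, phi (x + y) <= phi x + phi y,
      forall (c : R) x, phi (c *: x) = `|c| * phi x
    & forall x, phi x = 0 -> x = 0].

Definition convex_fun (f : V -> R) : Prop :=
  forall x y (l : R), 0 <= l -> l <= 1 ->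
    f ((1 - l) *: x + l *: y) <= (1 - l) * f x + l * f y.

Definition uniformly_convex (phi : V -> R) : Prop :=
  exists gamma : R, 0 < gamma /\ convex_fun (fun x => phi x - gamma * eucl x).

Definition e_ (i : 'I_n) : V := \row_(j < n) (if j == i then 1 else 0).

Definition C2_off0 (phi : V -> R) : Prop :=
  (forall x : V, x != 0 -> forall i : 'I_n, derivable phi x (e_ i)) /\
  (forall x : V, x != 0 -> forall i j : 'I_n,
      derivable (fun y => 'D_(e_ i) phi y) x (e_ j)) /\
  (forall i : 'I_n,
      {within [set x : V | x != 0], continuous (fun y => 'D_(e_ i) phi y)}) /\
  (forall i j : 'I_n,
      {within [set x : V | x != 0],
        continuous (fun y => 'D_(e_ j) (fun z => 'D_(e_ i) phi z) y)}).

Variable phi : V -> R.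

Definition delta (K : set V) (x : V) : R := inf [set phi (y - x) | y in K].

Definition xi (K : set V) (x : V) : set V :=
  K `&` [set w | phi (x - w) = delta K x].

(* rho computed with an arbitrary (chosen) element w of xi K x *)
Definition rho (K : set V) (x : V) : \bar R :=
  let w := xget 0 (xi K x) in
  ereal_sup [set (s'%:E) | s' in
    [set s' : R | delta K (w + s' *: (x - w)) = s' * delta K x]].

Definition Klst (K : set V) (l s t : R) : set V :=
  [set x | (l%:E <= rho K x)%E /\ s <= delta K x /\ delta K x <= t].

End Defs.

(* Main.v *)
Require Import Defs.
From HB Require Import structures.
From mathcomp Require Import all_boot all_order all_algebra.
From mathcomp Require Import all_classical all_reals all_analysis.
From mathcomp Require Import ring lra.
Import Order.TTheory GRing.Theory Num.Theory.
Import numFieldNormedType.Exports.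
Local Open Scope classical_set_scope.
Local Open Scope ring_scope.
Set Implicit Arguments. Unset Strict Implicit. Unset Printing Implicit Defensive.

Section NormBasics.
Variables (R : realType) (n : nat).
Local Notation V := 'rV[R]_n.
Variable phi : V -> R.
Hypothesis Hphi : is_norm phi.

Lemma phiZ c x : phi (c *: x) = `|c| * phi x.
Proof. by case: Hphi. Qed.
Lemma phiD x y : phi (x + y) <= phi x + phi y.
Proof. by case: Hphi. Qed.
Lemma phi0 : phi 0 = 0.
Proof. by rewrite -(scale0r (0 : V)) phiZ normr0 mul0r. Qed.
Lemma phiN x : phi (- x) = phi x.
Proof. by rewrite -scaleN1r phiZ normrN normr1 mul1r. Qed.
Lemma phi_ge0 x : 0 <= phi x.
Proof.
have := phiD x (- x); rewrite subrr phi0 phiN => h.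
by rewrite -(@pmulr_rge0 _ 2) // mulr2n mulrDl !mul1r.
Qed.
Lemma phiB x y : phi (x - y) = phi (y - x).
Proof. by rewrite -phiN opprB. Qed.
Lemma phi_lip x y : phi x - phi y <= phi (x - y).
Proof.
have := phiD (x - y) y; rewrite subrK => h; by rewrite lerBlDr.
Qed.
Lemma phi_lipA x y : `|phi x - phi y| <= phi (x - y).
Proof.
rewrite ler_norml phi_lip andbT lerNl opprB.
by rewrite phiB phi_lip.
Qed.
Lemma phi_eq0 x : phi x = 0 -> x = 0.
Proof. by case: Hphi => _ _; apply. Qed.

End NormBasics.

Section Euclid.
Variables (R : realType) (n : nat).
Local Notation V := 'rV[R]_n.

Definition dot (x y : V) : R := \sum_(i < n) x ord0 i * y ord0 i.

Lemma dotC (x : V) (y : V) : dot x y = dot y x.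
Proof. by apply: eq_bigr => i _; rewrite mulrC. Qed.
Lemma dotDl (x : V) (y : V) (z : V) : dot (x + y) z = dot x z + dot y z.
Proof. by rewrite /dot -big_split; apply: eq_bigr => i _; rewrite !mxE mulrDl. Qed.
Lemma dotDr (x : V) (y : V) (z : V) : dot z (x + y) = dot z x + dot z y.
Proof. by rewrite dotC dotDl !(dotC z). Qed.
Lemma dotZl (c : R) (x : V) (y : V) : dot (c *: x) y = c * dot x y.
Proof. by rewrite /dot mulr_sumr; apply: eq_bigr => i _; rewrite !mxE mulrA. Qed.
Lemma dotZr (c : R) (x : V) (y : V) : dot y (c *: x) = c * dot y x.
Proof. by rewrite dotC dotZl dotC. Qed.
Lemma dotNl (x : V) (y : V) : dot (- x) y = - dot x y.
Proof. by rewrite -scaleN1r dotZl mulN1r. Qed.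
Lemma dotNr (x : V) (y : V) : dot y (- x) = - dot y x.
Proof. by rewrite -scaleN1r dotZr mulN1r. Qed.
Lemma dotBl (x : V) (y : V) (z : V) : dot (x - y) z = dot x z - dot y z.
Proof. by rewrite dotDl dotNl. Qed.
Lemma dotBr (x : V) (y : V) (z : V) : dot z (x - y) = dot z x - dot z y.
Proof. by rewrite dotDr dotNr. Qed.
Lemma dot_ge0 (x : V) : 0 <= dot x x.
Proof. by apply: sumr_ge0 => i _; rewrite -expr2 sqr_ge0. Qed.

Lemma euclE (x : V) : eucl x = Num.sqrt (dot x x).
Proof. by rewrite /eucl /dot; congr Num.sqrt; apply: eq_bigr => i _; rewrite expr2. Qed.
Lemma eucl_ge0 (x : V) : 0 <= eucl x.
Proof. by rewrite euclE sqrtr_ge0. Qed.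
Lemma eucl_sq (x : V) : eucl x ^+ 2 = dot x x.
Proof. by rewrite euclE sqr_sqrtr // dot_ge0. Qed.
Lemma euclZ (c : R) (x : V) : eucl (c *: x) = `|c| * eucl x.
Proof.
rewrite !euclE dotZl dotZr mulrA -expr2 sqrtrM ?sqr_ge0 //.
by rewrite sqrtr_sqr.
Qed.
Lemma euclN (x : V) : eucl (- x) = eucl x.
Proof. by rewrite -scaleN1r euclZ normrN normr1 mul1r. Qed.
Lemma eucl0 : eucl (0 : V) = 0.
Proof. by rewrite -(scale0r (0 : V)) euclZ normr0 mul0r. Qed.

Lemma CS (x : V) (y : V) : dot x y ^+ 2 <= dot x x * dot y y.
Proof.
have [x0|xn0] := eqVneq (dot x x) 0.
  have hx : forall i, x ord0 i = 0.
    move=> i; have := x0; rewrite /dot => /eqP.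
    rewrite psumr_eq0; last by move=> j _; rewrite -expr2 sqr_ge0.
    by move=> /allP /(_ i (mem_index_enum _)) /=; rewrite mulf_eq0 orbb => /eqP.
  have -> : dot x y = 0 by rewrite /dot big1 // => i _; rewrite hx mul0r.
  by rewrite x0 expr0n mul0r.
have xp : 0 < dot x x by rewrite lt_def xn0 dot_ge0.
set t := dot x y / dot x x.
have := dot_ge0 (t *: x - y).
rewrite dotBl !dotBr dotZl !dotZr dotZl (dotC y x) => h.
have e : t * (t * dot x x) = dot x y ^+ 2 / dot x x.
  by rewrite /t; field; rewrite xn0.
have e2 : t * dot x y = dot x y ^+ 2 / dot x x.
  by rewrite /t; field; rewrite xn0.
move: h; rewrite e e2 => h.
have : dot x y ^+ 2 / dot x x <= dot y y by lra.
by rewrite ler_pdivrMr // mulrC.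
Qed.

Lemma CS' x y : dot x y <= eucl x * eucl y.
Proof.
have h := CS x y.
rewrite -[dot x y]/(dot x y) ; apply: le_trans (ler_norm _) _.
rewrite -(@ler_pXn2r _ 2) ?nnegrE ?normr_ge0 ?mulr_ge0 ?eucl_ge0 //.
by rewrite exprMn !eucl_sq real_normK ?num_real.
Qed.

Lemma coord_le (x : V) (i : 'I_n) : `|x ord0 i| <= eucl x.
Proof.
rewrite -(@ler_pXn2r _ 2) ?nnegrE ?normr_ge0 ?eucl_ge0 //.
rewrite eucl_sq real_normK ?num_real // /dot (bigD1 i) //= -expr2 lerDl.
by apply: sumr_ge0 => j _; rewrite -expr2 sqr_ge0.
Qed.

Lemma eucl_sqD (x : V) (y : V) : eucl (x + y) ^+ 2 = eucl x ^+ 2 + 2 * dot x y + eucl y ^+ 2.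
Proof. rewrite !eucl_sq dotDl !dotDr (dotC y x); ring. Qed.
Lemma eucl_sqB (x : V) (y : V) : eucl (x - y) ^+ 2 = eucl x ^+ 2 - 2 * dot x y + eucl y ^+ 2.
Proof. rewrite !eucl_sq dotBl !dotBr (dotC y x); ring. Qed.

Lemma row_decomp (x : V) : x = \sum_(i < n) x ord0 i *: e_ R i.
Proof.
apply/rowP => j; rewrite summxE (bigD1 j) //= big1 ?addr0.
  by rewrite !mxE eqxx mulr1.
by move=> i /negbTE ij; rewrite !mxE eq_sym ij mulr0.
Qed.

End Euclid.

Section Compare.
Variables (R : realType) (n : nat).
Local Notation V := 'rV[R]_n.
Variable phi : V -> R.
Hypothesis Hphi : is_norm phi.

Lemma phi_sum (I : Type) (r : seq I) (F : I -> V) :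
  phi (\sum_(i <- r) F i) <= \sum_(i <- r) phi (F i).
Proof.
apply: (big_ind2 (fun a b => phi a <= b)).
- by rewrite phi0.
- move=> a1 a2 b1 b2 h1 h2; apply: le_trans (phiD Hphi _ _) _; exact: lerD.
- by [].
Qed.

Definition Cn := \sum_(i < n) phi (e_ R i).

Lemma Cn_ge0 : 0 <= Cn.
Proof. by apply: sumr_ge0 => i _; apply: phi_ge0. Qed.

Lemma phi_le_coord (M : R) (x : V) : (forall i, `|x ord0 i| <= M) -> phi x <= Cn * M.
Proof.
move=> hM; rewrite {1}(row_decomp x); apply: le_trans (phi_sum _ _) _.
rewrite /Cn mulr_suml; apply: ler_sum => i _.
by rewrite (phiZ Hphi) mulrC ler_wpM2l ?phi_ge0.
Qed.

Lemma phi_le_eucl (x : V) : phi x <= Cn * eucl x.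
Proof. by apply: phi_le_coord => i; apply: coord_le. Qed.

Lemma coord_le_norm (x : V) i : `|x ord0 i| <= `|x|.
Proof.
have -> : `|x| = mx_norm x by [].
rewrite mx_normrE.
by apply: le_trans (le_bigmax _ _ (ord0, i)).
Qed.

Lemma phi_le_norm (x : V) : phi x <= Cn * `|x|.
Proof. by apply: phi_le_coord => i; apply: coord_le_norm. Qed.

Lemma phi_cont : continuous phi.
Proof.
move=> x; apply/(@cvgrPdist_le _ _ _ _ (nbhs_filter x)) => e e0.
have k0 : 0 < e / (Cn + 1) by rewrite divr_gt0 // ltr_wpDl ?Cn_ge0.
apply/nbhs_ballP; exists (e / (Cn + 1)) => // y.
rewrite -ball_normE /= => hy.
apply: le_trans (phi_lipA Hphi _ _) _.
apply: le_trans (phi_le_norm _) _.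
move: hy; rewrite ltr_pdivlMr ?ltr_wpDl ?Cn_ge0 // => h.
apply: le_trans (ltW h); rewrite mulrC ler_wpM2l ?normr_ge0 //.
by rewrite lerDl.
Qed.

Variable gamma : R.
Hypothesis gamma0 : 0 < gamma.
Hypothesis Hconv : convex_fun (fun x => phi x - gamma * eucl x).

Lemma phi_ge_eucl (x : V) : gamma * eucl x <= phi x.
Proof.
have := Hconv x (- x) (l:=1/2) _ _.
have h1 : (0 : R) <= 1/2 by rewrite divr_ge0.
have h2 : (1/2 : R) <= 1 by rewrite ler_pdivrMr // mul1r ler1n.
move=> /(_ h1 h2).
have -> : (1 - 1/2 : R) *: x + 1/2 *: - x = 0.
  rewrite scalerN -scalerBl.
  have -> : (1 - 1/2 - 1/2 : R) = 0 by lra.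
  by rewrite scale0r.
rewrite (phi0 Hphi) eucl0 mulr0 subrr (phiN Hphi) euclN.
lra.
Qed.

Lemma eucl_le_phi (x : V) : eucl x <= phi x / gamma.
Proof. by rewrite ler_pdivlMr // mulrC phi_ge_eucl. Qed.

Lemma norm_le_eucl (x : V) : `|x| <= eucl x.
Proof.
have -> : `|x| = mx_norm x by [].
rewrite mx_normrE; apply: bigmax_le; first exact: eucl_ge0.
by move=> [i j] _ /=; rewrite (ord1 i) coord_le.
Qed.

Lemma annulus_compact (a b : R) : compact [set x : V | a <= phi x <= b].
Proof.
apply: bounded_closed_compact.
  exists (b / gamma); split; first exact: num_real.
  move=> M hM x /= /andP[_ hb]; apply: le_trans (ltW hM).
  apply: le_trans (norm_le_eucl _) _; apply: le_trans (eucl_le_phi _) _.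
  by rewrite ler_pM2r ?invr_gt0.
have -> : [set x : V | a <= phi x <= b] = phi @^-1` `[a, b].
  by apply/seteqP; split => x /=; rewrite in_itv.
apply: closed_comp; last exact: interval_closed.
by move=> x _; apply: phi_cont.
Qed.

End Compare.

Section Line.
Variables (R : realType) (n : nat).
Local Notation V := 'rV[R]_n.

Lemma line_derive (f : V -> R) (z v : V) (s : R) :
  derivable f (s *: v + z) v ->
  is_derive s 1 (fun t : R => f (t *: v + z)) ('D_v f (s *: v + z)).
Proof.
move=> hd.
have E : (fun h : R => h^-1 *: (((fun t : R => f (t *: v + z)) \o shift s) (h *: 1)
            - f (s *: v + z)))
       = (fun h : R => h^-1 *: ((f \o shift (s *: v + z)) (h *: v) - f (s *: v + z))).
  apply: funext => h /=.
  by rewrite [h%:A]mulr1 scalerDl addrA.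
have hd' : derivable (fun t : R => f (t *: v + z)) s 1.
  by rewrite /derivable E.
have := derivableP hd'.
suff -> : 'D_1 (fun t : R => f (t *: v + z)) s = 'D_v f (s *: v + z) by [].
by rewrite /derive E.
Qed.

Lemma mvi (g dg : R -> R) (a b M : R) :
  a <= b ->
  (forall x, x \in `[a, b] -> is_derive x 1 g (dg x)) ->
  (forall x, x \in `[a, b] -> `|dg x| <= M) ->
  `|g b - g a| <= M * (b - a).
Proof.
move=> ab hd hM.
have hc : {within `[a, b], continuous g}.
  apply: derivable_within_continuous => x hx.
  by have := hd x hx => /@ex_derive.
have [c hc' ->] := MVT_segment ab (fun x hx => hd x (subset_itv_oo_cc hx)) hc.
have ba : 0 <= b - a by rewrite subr_ge0.
rewrite normrM (ger0_norm ba).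
by rewrite ler_wpM2r ?subr_ge0 ?hM.
Qed.

End Line.

Section Mixed.
Variables (R : realType) (n : nat).
Local Notation V := 'rV[R]_n.
Variable phi : V -> R.
Hypothesis Hphi : is_norm phi.
Hypothesis HC2 : C2_off0 phi.

Local Notation ee := (e_ R).
Definition d1 (i : 'I_n) (y : V) := 'D_(ee i) phi y.
Definition d2 (i j : 'I_n) (y : V) := 'D_(ee j) (fun z => 'D_(ee i) phi z) y.

Definition Mix (z e p : V) := phi (z + e + p) - phi (z + e) - phi (z + p) + phi z.

Variables (S : set V) (z0 : V) (rho0 M : R).
Hypothesis HS0 : forall x, S x -> x != 0.
Hypothesis Hreg : forall w, phi w <= rho0 -> S (z0 + w).
Hypothesis HM : forall i j x, S x -> `|d2 i j x| <= M.
Hypothesis HM0 : 0 <= M.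

Lemma mvi2 (g dg : R -> R) (a b K : R) :
  (forall x, Num.min a b <= x <= Num.max a b -> is_derive x 1 g (dg x)) ->
  (forall x, Num.min a b <= x <= Num.max a b -> `|dg x| <= K) ->
  `|g b - g a| <= K * `|b - a|.
Proof.
have [ab|ba] := leP a b.
  move=> h1 h2; have ba : 0 <= b - a by rewrite subr_ge0.
  rewrite (ger0_norm ba).
  by apply: mvi.
move=> h1 h2; rewrite -normrN opprB -(normrN (b - a)) opprB.
have ab' : 0 <= a - b by rewrite subr_ge0 ltW.
rewrite (ger0_norm ab').
by apply: mvi => //; apply: ltW.
Qed.

Lemma between_abs (a x : R) : Num.min 0 a <= x <= Num.max 0 a -> `|x| <= `|a|.
Proof.
case/andP => h1 h2.
have [a0|a0] := leP 0 a.
  move: h1 h2; rewrite (min_idPl a0) (max_idPr a0) => h1 h2.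
  by rewrite !ger0_norm.
move: h1 h2; rewrite (min_idPr (ltW a0)) (max_idPl (ltW a0)) => h1 h2.
rewrite !ler0_norm ?(ltW a0) //; lra.
Qed.

Lemma rect (z : V) (i j : 'I_n) (a b : R) :
  phi (z - z0) + `|a| * phi (ee i) + `|b| * phi (ee j) <= rho0 ->
  `|Mix z (a *: ee i) (b *: ee j)| <= M * `|a| * `|b|.
Proof.
move=> hz.
have inS : forall s t, `|s| <= `|a| -> `|t| <= `|b| -> S (s *: ee i + (t *: ee j + z)).
  move=> s t hs ht.
  have -> : s *: ee i + (t *: ee j + z) = z0 + (s *: ee i + t *: ee j + (z - z0)).
    by apply/rowP => q; rewrite !mxE; ring.
  apply: Hreg; apply: le_trans hz.
  apply: le_trans (phiD Hphi _ _) _.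
  rewrite addrC -addrA lerD2l.
  apply: le_trans (phiD Hphi _ _) _.
  rewrite !(phiZ Hphi); apply: lerD; apply: ler_wpM2r; by rewrite ?phi_ge0.
have nz : forall s t, `|s| <= `|a| -> `|t| <= `|b| -> s *: ee i + (t *: ee j + z) != 0.
  by move=> s t hs ht; apply: HS0; apply: inS.
case: HC2 => D1 [D2 _].
pose k s := phi (s *: ee i + (b *: ee j + z)) - phi (s *: ee i + z).
pose dk s := d1 i (s *: ee i + (b *: ee j + z)) - d1 i (s *: ee i + z).
have zE : forall s, s *: ee i + z = s *: ee i + (0 *: ee j + z).
  by move=> s; rewrite scale0r add0r.
have hder : forall s, Num.min 0 a <= s <= Num.max 0 a -> is_derive s 1 k (dk s).
  move=> s hs; have hs' := between_abs hs.
  apply: is_deriveB.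
    apply: line_derive; apply: D1; apply: nz => //; exact: lexx.
  apply: line_derive; apply: D1; rewrite zE; apply: nz => //.
  by rewrite normr0 normr_ge0.
have hb : forall s, Num.min 0 a <= s <= Num.max 0 a -> `|dk s| <= M * `|b|.
  move=> s hs; have hs' := between_abs hs.
  pose g t := d1 i (t *: ee j + (s *: ee i + z)).
  pose dg t := d2 i j (t *: ee j + (s *: ee i + z)).
  have -> : dk s = g b - g 0.
    rewrite /dk /g scale0r add0r; congr (d1 i _ - _).
    by rewrite addrCA.
  have -> : M * `|b| = M * `|b - 0| by rewrite subr0.
  apply: mvi2.
    move=> t ht; have ht' := between_abs ht.
    apply: line_derive; apply: D2.
    by rewrite addrCA; apply: nz.
  move=> t ht; have ht' := between_abs ht.
  apply: HM; rewrite addrCA; apply: inS => //.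
have := mvi2 hder hb.
have -> : k a - k 0 = Mix z (a *: ee i) (b *: ee j).
  rewrite /k /Mix !scale0r !add0r.
  have -> : a *: ee i + (b *: ee j + z) = z + a *: ee i + b *: ee j.
    by apply/rowP => q; rewrite !mxE; ring.
  rewrite [z + a *: _]addrC [z + b *: _]addrC; ring.
by rewrite subr0 -mulrA [`|b| * _]mulrC mulrA.
Qed.

Lemma MixDp z e p1 p2 : Mix z e (p1 + p2) = Mix z e p1 + Mix (z + p1) e p2.
Proof.
rewrite /Mix.
have -> : z + e + (p1 + p2) = z + p1 + e + p2 by apply/rowP => q; rewrite !mxE; ring.
have -> : z + p1 + e = z + e + p1 by apply/rowP => q; rewrite !mxE; ring.
rewrite [z + (p1 + p2)]addrA; ring.
Qed.

Lemma MixDe z e1 e2 p : Mix z (e1 + e2) p = Mix z e1 p + Mix (z + e1) e2 p.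
Proof. rewrite /Mix !addrA; ring. Qed.

Lemma Mix0p z e : Mix z e 0 = 0.
Proof. by rewrite /Mix !addr0; ring. Qed.
Lemma Mix0e z p : Mix z 0 p = 0.
Proof. by rewrite /Mix !addr0; ring. Qed.

Lemma sum_abs_ge0 (r : seq 'I_n) (c : 'I_n -> R) (w : 'I_n -> R) :
  (forall j, 0 <= w j) -> 0 <= \sum_(j <- r) `|c j| * w j.
Proof. by move=> h; apply: sumr_ge0 => j _; rewrite mulr_ge0. Qed.

Lemma mix_p (r : seq 'I_n) (c : 'I_n -> R) z i a :
  phi (z - z0) + `|a| * phi (ee i) + \sum_(j <- r) `|c j| * phi (ee j) <= rho0 ->
  `|Mix z (a *: ee i) (\sum_(j <- r) c j *: ee j)| <= M * `|a| * \sum_(j <- r) `|c j|.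
Proof.
elim: r z => [|j r IH] z hz.
  by rewrite !big_nil Mix0p normr0 mulr0.
rewrite !big_cons MixDp mulrDr.
apply: le_trans (ler_normD _ _) _.
move: hz; rewrite big_cons => hz.
have h0 := sum_abs_ge0 r c (fun j => phi_ge0 Hphi (ee j)).
apply: lerD.
  apply: rect; apply: le_trans hz.
  lra.
apply: IH; apply: le_trans hz.
have hp : phi (z + c j *: ee j - z0) <= phi (z - z0) + `|c j| * phi (ee j).
  have -> : z + c j *: ee j - z0 = (z - z0) + c j *: ee j by apply/rowP => q; rewrite !mxE; ring.
  by apply: le_trans (phiD Hphi _ _) _; rewrite (phiZ Hphi).
lra.
Qed.

Lemma mix_e (r r' : seq 'I_n) (d c : 'I_n -> R) z :
  phi (z - z0) + \sum_(i <- r) `|d i| * phi (ee i) + \sum_(j <- r') `|c j| * phi (ee j) <= rho0 ->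
  `|Mix z (\sum_(i <- r) d i *: ee i) (\sum_(j <- r') c j *: ee j)|
     <= M * (\sum_(i <- r) `|d i|) * \sum_(j <- r') `|c j|.
Proof.
elim: r z => [|i r IH] z hz.
  by rewrite !big_nil Mix0e normr0 mulr0 mul0r.
rewrite !big_cons MixDe mulrDr mulrDl.
apply: le_trans (ler_normD _ _) _.
move: hz; rewrite big_cons => hz.
have h0 := sum_abs_ge0 r d (fun j => phi_ge0 Hphi (ee j)).
apply: lerD.
  apply: mix_p; apply: le_trans hz.
  have h1 := sum_abs_ge0 r' c (fun j => phi_ge0 Hphi (ee j)).
  lra.
apply: IH; apply: le_trans hz.
have hp : phi (z + d i *: ee i - z0) <= phi (z - z0) + `|d i| * phi (ee i).
  have -> : z + d i *: ee i - z0 = (z - z0) + d i *: ee i by apply/rowP => q; rewrite !mxE; ring.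
  by apply: le_trans (phiD Hphi _ _) _; rewrite (phiZ Hphi).
lra.
Qed.

Lemma sum_coord_le (x : V) : \sum_(i < n) `|x ord0 i| * phi (ee i) <= Cn phi * eucl x.
Proof.
rewrite /Cn /= mulr_suml; apply: ler_sum => i _.
by rewrite mulrC ler_wpM2l ?phi_ge0 ?coord_le.
Qed.

Lemma sum_coord_le' (x : V) : \sum_(i < n) `|x ord0 i| <= n%:R * eucl x.
Proof.
rewrite -[n in n%:R]card_ord -sumr_const mulr_suml; apply: ler_sum => i _; rewrite mul1r; exact: coord_le.
Qed.

Lemma mix_bound (e p : V) :
  Cn phi * (eucl e + eucl p) <= rho0 ->
  `|Mix z0 e p| <= M * (n%:R * eucl e) * (n%:R * eucl p).
Proof.
move=> h.
rewrite {1}(row_decomp e) {1}(row_decomp p).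
apply: le_trans (@mix_e (index_enum _) (index_enum _) (fun i => e ord0 i) (fun i => p ord0 i) z0 _) _.
  rewrite subrr (phi0 Hphi) add0r; apply: le_trans h.
  by rewrite mulrDr; apply: lerD; apply: sum_coord_le.
have s1 := sum_coord_le' e; have s2 := sum_coord_le' p.
have g1 : 0 <= \sum_(i < n) `|e ord0 i| by apply: sumr_ge0.
have g2 : 0 <= \sum_(i < n) `|p ord0 i| by apply: sumr_ge0.
rewrite -mulrA -[X in _ <= X]mulrA; apply: ler_wpM2l => //.
by apply: ler_pM.
Qed.

End Mixed.

Section HessBound.
Variables (R : realType) (n : nat).
Local Notation V := 'rV[R]_n.
Variable phi : V -> R.
Hypothesis Hphi : is_norm phi.
Hypothesis HC2 : C2_off0 phi.
Variable gamma : R.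
Hypothesis gamma0 : 0 < gamma.
Hypothesis Hconv : convex_fun (fun x => phi x - gamma * eucl x).

Lemma hess_bound1 (a0 b0 : R) (i j : 'I_n) : 0 < a0 ->
  exists M : R, 0 <= M /\ forall x, a0 <= phi x <= b0 -> `|d2 phi i j x| <= M.
Proof.
move=> a00.
set S := [set x : V | a0 <= phi x <= b0].
have [S0|Sne] := pselect (S !=set0); last first.
  exists 0; split => // x hx; exfalso; apply: Sne; by exists x.
have cS : compact S by apply: (annulus_compact Hphi gamma0 Hconv).
have cont : {within S, continuous (d2 phi i j)}.
  apply: (@continuous_subspaceW _ _ _ [set x : V | x != 0]).
    move=> x /= /andP[h _]; apply/negP => /eqP x0.
    by move: h; rewrite x0 (phi0 Hphi) leNgt a00.
  by case: HC2 => _ [_ [_ h]]; apply: h.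
have [c1 _ h1] := EVT_max_rV S0 cS cont.
have [c2 _ h2] := EVT_min_rV S0 cS cont.
exists (`|d2 phi i j c1| + `|d2 phi i j c2|); split.
  by rewrite addr_ge0.
move=> x hx.
have hxS : x \in S by rewrite inE.
have u1 := h1 x hxS; have u2 := h2 x hxS.
move: u1 u2; generalize (d2 phi i j x) (d2 phi i j c1) (d2 phi i j c2).
move=> a b c u1 u2.
rewrite ler_norml; apply/andP; split.
  have := normr_ge0 b.
  have : - `|c| <= c by rewrite lerNl -normrN ler_norm.
  lra.
have := ler_norm b; have := normr_ge0 c. lra.
Qed.

Lemma hess_bound (a0 b0 : R) : 0 < a0 ->
  exists M : R, 0 <= M /\ forall i j x, a0 <= phi x <= b0 -> `|d2 phi i j x| <= M.
Proof.
move=> a00.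
have : forall ij : 'I_n * 'I_n, exists M : R,
    0 <= M /\ forall x, a0 <= phi x <= b0 -> `|d2 phi ij.1 ij.2 x| <= M.
  by move=> [i j]; apply: hess_bound1.
case/fin_all_exists => Mf hMf.
exists (\sum_(ij : 'I_n * 'I_n) Mf ij); split.
  by apply: sumr_ge0 => ij _; case: (hMf ij).
move=> i j x hx.
case: (hMf (i, j)) => _ /(_ x hx) /= h.
apply: le_trans h _.
rewrite (bigD1 (i, j)) //= lerDl.
by apply: sumr_ge0 => ij _; case: (hMf ij).
Qed.

End HessBound.

Section EuclidId.
Variables (R : realType) (n : nat).
Local Notation V := 'rV[R]_n.

Lemma eucl_comb (A B : V) (mu : R) :
  eucl ((1 - mu) *: A + mu *: B) ^+ 2 =
  (1 - mu) ^+ 2 * eucl A ^+ 2 + 2 * (1 - mu) * mu * dot A B + mu ^+ 2 * eucl B ^+ 2.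
Proof.
rewrite !eucl_sq dotDl !dotDr !dotZl !dotZr ?dotZl ?dotZr (dotC B A); ring.
Qed.

Lemma eucl_diff (A B : V) :
  eucl (B - A) ^+ 2 = (eucl B - eucl A) ^+ 2 + 2 * (eucl A * eucl B - dot A B).
Proof.
rewrite eucl_sqB (dotC B A).
have : eucl B ^+ 2 - 2 * dot A B + eucl A ^+ 2 =
  (eucl B - eucl A) ^+ 2 + 2 * (eucl A * eucl B - dot A B) by ring.
by [].
Qed.

Lemma eucl_proj (A B : V) : eucl A != 0 ->
  eucl (B - (eucl B / eucl A) *: A) ^+ 2 =
  2 * (eucl B / eucl A) * (eucl A * eucl B - dot A B).
Proof.
move=> a0.
rewrite eucl_sqB euclZ dotZr.
have -> : `|eucl B / eucl A| = eucl B / eucl A.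
  by rewrite ger0_norm // divr_ge0 ?eucl_ge0.
rewrite (dotC B A).
field. done.
Qed.

End EuclidId.

Section Core.
Variables (R : realType) (n : nat).
Local Notation V := 'rV[R]_n.
Variable phi : V -> R.
Hypothesis Hphi : is_norm phi.
Hypothesis HC2 : C2_off0 phi.
Variable gamma : R.
Hypothesis gamma0 : 0 < gamma.
Hypothesis Hconv : convex_fun (fun x => phi x - gamma * eucl x).
Variables (s t : R).
Hypothesis s0 : 0 < s.
Hypothesis st : s <= t.

Lemma Mix_triv (u e p : V) : `|Mix phi u e p| <= 2 * phi e.
Proof.
rewrite /Mix.
have h1 := phi_lipA Hphi (u + e + p) (u + p).
have h2 := phi_lipA Hphi (u + e) u.
move: h1 h2.
have -> : u + e + p - (u + p) = e by apply/rowP => q; rewrite !mxE; ring.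
have -> : u + e - u = e by apply/rowP => q; rewrite !mxE; ring.
move: (phi (u + e + p)) (phi (u + e)) (phi (u + p)) (phi u) (phi e) => a b c d f h1 h2.
rewrite ler_norml in h1; rewrite ler_norml in h2.
case/andP: h1 => h1 h1'; case/andP: h2 => h2 h2'.
rewrite ler_norml; apply/andP; split; lra.
Qed.

Let C1 := Cn phi + 1.
Lemma C1_gt0 : 0 < C1.
Proof. by rewrite /C1 ltr_wpDl ?Cn_ge0. Qed.
Lemma phi_le_C1 (x : V) : phi x <= C1 * eucl x.
Proof.
apply: le_trans (phi_le_eucl Hphi x) _.
by rewrite ler_wpM2r ?eucl_ge0 // /C1 lerDl.
Qed.

Lemma mix_ext : exists eta M2 : R, [/\ 0 < eta, 0 <= M2 &
  forall u e p : V, s <= phi u <= t -> phi e <= eta ->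
    `|Mix phi u e p| <= M2 * phi e * phi p].
Proof.
have [M [M0 HM]] := hess_bound Hphi HC2 gamma0 Hconv (t + 1) (divr_gt0 s0 (ltr0Sn _ 1)).
set rho0 := Num.min (s / 2) 1.
have rho00 : 0 < rho0 by rewrite lt_min divr_gt0 ?ltr01.
set eta := rho0 * gamma / (2 * C1).
have eta0 : 0 < eta by rewrite divr_gt0 ?mulr_gt0 ?C1_gt0.
set M1 := M * n%:R ^+ 2 / gamma ^+ 2.
have M10 : 0 <= M1 by rewrite divr_ge0 ?mulr_ge0 ?exprn_ge0 // ltW.
have i0 : 0 <= 2 / eta by rewrite divr_ge0 // ltW.
exists eta, (M1 + 2 / eta); split => //.
  by rewrite addr_ge0.
move=> u e p hu he.
have pe0 := phi_ge0 Hphi e; have pp0 := phi_ge0 Hphi p.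
have [hp|hp] := leP (phi p) eta; last first.
  apply: le_trans (Mix_triv u e p) _.
  have k : 2 * phi e <= 2 / eta * phi e * phi p.
    have -> : 2 / eta * phi e * phi p = 2 * phi e * (phi p / eta).
      ring.
    by rewrite ler_peMr ?mulr_ge0 // ler_pdivlMr // mul1r ltW.
  apply: le_trans k _.
  by rewrite ler_wpM2r // ler_wpM2r // lerDr.
set S := [set x : V | s / 2 <= phi x <= t + 1].
have HS0 : forall x, S x -> x != 0.
  move=> x /= /andP[h _]; apply/negP => /eqP x0.
  by move: h; rewrite x0 (phi0 Hphi) leNgt divr_gt0.
have Hreg : forall w, phi w <= rho0 -> S (u + w).
  move=> w hw; rewrite /S /=.
  have h1 := phiD Hphi u w.
  have h2 := phi_lip Hphi u (- w).
  rewrite opprK (phiN Hphi) in h2.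
  have r1 : rho0 <= s / 2 by rewrite ge_min lexx.
  have r2 : rho0 <= 1 by rewrite ge_min lexx orbT.
  case/andP: hu => hu1 hu2.
  move: h1 h2 hw hu1 hu2; move: (phi (u + w)) (phi u) (phi w) => a b c h1 h2 hw hu1 hu2.
  apply/andP; split; lra.
have hM' : forall i j x, S x -> `|d2 phi i j x| <= M by move=> i j x hx; apply: HM.
have hb := mix_bound Hphi HC2 HS0 Hreg hM' M0 (e := e) (p := p).
have ee := eucl_le_phi Hphi gamma0 Hconv e.
have ep := eucl_le_phi Hphi gamma0 Hconv p.
have ee0 := eucl_ge0 e; have ep0 := eucl_ge0 p.
have cn0 := Cn_ge0 Hphi.
have hc : Cn phi * (eucl e + eucl p) <= rho0.
  have a1 : eucl e <= eta / gamma by apply: le_trans ee _; rewrite ler_pM2r ?invr_gt0.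
  have a2 : eucl p <= eta / gamma by apply: le_trans ep _; rewrite ler_pM2r ?invr_gt0.
  have h1 : eucl e + eucl p <= 2 * (eta / gamma).
    by rewrite mulr2n mulrDl mul1r; apply: lerD.
  have h2 : C1 * (2 * (eta / gamma)) = rho0.
    rewrite /eta; have := C1_gt0; move: C1 => c c0.
    by field; rewrite gt_eqF ?gamma0 // gt_eqF.
  rewrite -h2; apply: ler_pM => //; first by rewrite addr_ge0.
  by rewrite /C1 lerDl.
apply: le_trans (hb hc) _.
apply: le_trans (_ : M1 * phi e * phi p <= _); last first.
  by rewrite ler_wpM2r // ler_wpM2r // lerDl.
rewrite /M1.
have -> : M * n%:R ^+ 2 / gamma ^+ 2 * phi e * phi p
  = M * (n%:R * (phi e / gamma)) * (n%:R * (phi p / gamma)).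
  by field; rewrite gt_eqF.
apply: ler_pM; rewrite ?mulr_ge0 ?ler_wpM2l //.
Qed.

End Core.

Section RealFacts.
Variable R : realFieldType.

Lemma final_step (P E al be : R) : 0 <= P -> 0 <= E -> 0 <= al -> 0 <= be ->
  E <= (2 * be + 2)^-1 -> P ^+ 2 <= al * E * P + be * E ^+ 2 * P ^+ 2 ->
  P <= 2 * al * E.
Proof.
move=> P0 E0 al0 be0 hE hP.
have h2 : E * (2 * be + 2) <= 1 by rewrite -ler_pdivlMr ?div1r // ltr_wpDl ?mulr_ge0.
have hb : be * E ^+ 2 * P ^+ 2 <= P ^+ 2 / 2.
  have : be * E <= 1/2 by nra.
  have : E <= 1 by nra.
  move=> h3 h4.
  have : be * E ^+ 2 <= 1/2 by nra.
  move=> h5; have := sqr_ge0 P; nra.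
have hP2 : P ^+ 2 <= 2 * al * E * P by nra.
have [->|Pn0] := eqVneq P 0; first by rewrite mulr_ge0 ?mulr_ge0.
have Pp : 0 < P by rewrite lt_def Pn0.
by rewrite -(ler_pM2r Pp) -expr2.
Qed.

Lemma sq_le (x y : R) : `|x| <= y -> x ^+ 2 <= y ^+ 2.
Proof.
move=> h; rewrite -real_normK ?num_real // !expr2.
by apply: ler_pM; rewrite ?normr_ge0.
Qed.

Lemma final_alg (X f P E ba ep kp pa pb k0 dn c1 g m0 M2 : R) :
  0 < g -> 0 < m0 -> 0 <= M2 ->
  f <= M2 * E * P -> 0 <= f -> 2 * g * m0 * X <= f * dn ->
  (pb - kp * pa) ^+ 2 <= c1 ^+ 2 * (2 * kp * X) ->
  g ^+ 2 * ba ^+ 2 <= (kp * pa - pa) ^+ 2 ->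
  kp <= k0 -> ep ^+ 2 = ba ^+ 2 + 2 * X -> P ^+ 2 <= c1 ^+ 2 * ep ^+ 2 ->
  0 <= X -> 0 <= kp -> 0 <= dn -> 0 < c1 -> 0 <= P -> 0 <= E ->
  f = pb - pa ->
  P ^+ 2 <= c1 ^+ 2 * (4 * c1 ^+ 2 * k0 / g ^+ 2 + 2) * dn * M2 / (2 * g * m0) * E * P
            + 2 * c1 ^+ 2 * M2 ^+ 2 / g ^+ 2 * E ^+ 2 * P ^+ 2.
Proof.
move=> g0 m00 M20 fle f0 s2 s1 s3 kk hd hp X0 kp0 dn0 c10 P0 E0 fE.
have h1 : (kp * pa - pa) ^+ 2 <= 2 * (pb - kp * pa) ^+ 2 + 2 * f ^+ 2.
  rewrite fE; set x := pb - kp * pa; have -> : kp * pa - pa = - x + (pb - pa) by rewrite /x; ring.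
  have := sqr_ge0 (x + (pb - pa)); nra.
have c2 : 0 <= c1 ^+ 2 by rewrite sqr_ge0.
have h2 : g ^+ 2 * ba ^+ 2 <= 4 * c1 ^+ 2 * k0 * X + 2 * f ^+ 2.
  have : c1 ^+ 2 * (2 * kp * X) <= c1 ^+ 2 * (2 * k0 * X).
    apply: ler_wpM2l => //; apply: ler_wpM2r => //; lra.
  move=> h; nra.
have g2 : 0 < g ^+ 2 by rewrite exprn_gt0.
have h4 : g ^+ 2 * P ^+ 2 <= c1 ^+ 2 * ((4 * c1 ^+ 2 * k0 + 2 * g ^+ 2) * X + 2 * f ^+ 2).
  apply: le_trans (_ : g ^+ 2 * (c1 ^+ 2 * ep ^+ 2) <= _).
    by apply: ler_wpM2l => //; apply: ltW.
  rewrite hd; nra.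
have hX : X <= f * dn / (2 * g * m0).
  by rewrite ler_pdivlMr ?mulr_gt0 // mulrC.
have k00 : 0 <= k0 by apply: le_trans kk.
have hK : 0 <= 4 * c1 ^+ 2 * k0 + 2 * g ^+ 2.
  by rewrite addr_ge0 ?mulr_ge0 // ltW.
have h5 : c1 ^+ 2 * ((4 * c1 ^+ 2 * k0 + 2 * g ^+ 2) * X + 2 * f ^+ 2) <=
    c1 ^+ 2 * ((4 * c1 ^+ 2 * k0 + 2 * g ^+ 2) * ((M2 * E * P) * dn / (2 * g * m0))
      + 2 * (M2 * E * P) ^+ 2).
  apply: ler_wpM2l => //; apply: lerD.
    apply: ler_wpM2l => //; apply: le_trans hX _.
    rewrite ler_pM2r ?invr_gt0 ?mulr_gt0 //.
    by apply: ler_wpM2r.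
  apply: ler_wpM2l => //; apply: sq_le; rewrite ger0_norm //.
have e : c1 ^+ 2 * ((4 * c1 ^+ 2 * k0 + 2 * g ^+ 2) * ((M2 * E * P) * dn / (2 * g * m0))
      + 2 * (M2 * E * P) ^+ 2) = g ^+ 2 * (c1 ^+ 2 * (4 * c1 ^+ 2 * k0 / g ^+ 2 + 2) * dn * M2 / (2 * g * m0) * E * P
            + 2 * c1 ^+ 2 * M2 ^+ 2 / g ^+ 2 * E ^+ 2 * P ^+ 2).
  by field; rewrite ?gt_eqF.
rewrite -(ler_pM2l g2) -e.
by apply: le_trans h4 h5.
Qed.

End RealFacts.

Section Core2.
Variables (R : realType) (n : nat).
Local Notation V := 'rV[R]_n.
Variable phi : V -> R.
Hypothesis Hphi : is_norm phi.
Hypothesis HC2 : C2_off0 phi.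
Variable gamma : R.
Hypothesis gamma0 : 0 < gamma.
Hypothesis Hconv : convex_fun (fun x => phi x - gamma * eucl x).
Variables (s t lam : R).
Hypothesis s0 : 0 < s.
Hypothesis st : s <= t.
Hypothesis lam1 : 1 < lam.

Let C1 := Cn phi + 1.
Let C1_gt0 : 0 < C1.
Proof. by rewrite /C1 ltr_wpDl ?Cn_ge0. Qed.
Let phi_le_C1 (x : V) : phi x <= C1 * eucl x.
Proof.
apply: le_trans (phi_le_eucl Hphi x) _.
by rewrite ler_wpM2r ?eucl_ge0 // /C1 lerDl.
Qed.
Let eucl_le (x : V) : eucl x <= phi x / gamma := eucl_le_phi Hphi gamma0 Hconv x.

Lemma phi_convex (x y : V) (mu : R) : 0 <= mu -> mu <= 1 ->
  phi ((1 - mu) *: x + mu *: y) <= (1 - mu) * phi x + mu * phi y.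
Proof.
move=> m0 m1; apply: le_trans (phiD Hphi _ _) _.
rewrite !(phiZ Hphi) (ger0_norm m0) ger0_norm // subr_ge0 //.
Qed.

Let m0 := 1 - lam^-1.
Let Dn := (7 * t + 2) / gamma.
Let K0 := C1 * (3 * t + 1) / (gamma * s).
Let KX := 4 * C1 ^+ 2 * K0 / gamma ^+ 2 + 2.
Definition alpha (M2 : R) := C1 ^+ 2 * KX * Dn * M2 / (2 * gamma * m0).
Definition beta (M2 : R) := 2 * C1 ^+ 2 * M2 ^+ 2 / gamma ^+ 2.

Lemma core_step (M2 : R) (u e p : V) (mu : R) :
  0 <= M2 ->
  s <= phi u <= t -> phi p <= 2 * t + 1 -> 0 < mu -> mu <= lam^-1 ->
  phi u <= phi (u + mu *: p) -> phi (u + e + p) <= phi (u + e) ->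
  `|Mix phi u e p| <= M2 * phi e * phi p ->
  phi p ^+ 2 <= alpha M2 * phi e * phi p + beta M2 * phi e ^+ 2 * phi p ^+ 2.
Proof.
move=> M20 hu hp mu0 mul hc1 hc2 hmix.
have lam0 : 0 < lam by apply: lt_trans lam1.
have mu1 : mu < 1 by apply: le_lt_trans mul _; rewrite invf_lt1.
have m00 : 0 < m0 by rewrite /m0 subr_gt0 invf_lt1.
have mum0 : m0 <= 1 - mu by rewrite /m0 lerD2l lerN2.
set A := u; set B := u + p; set Cc := u + mu *: p.
have CcE : Cc = (1 - mu) *: A + mu *: B by apply/rowP => q; rewrite !mxE; ring.
set E := phi e; set P := phi p.
have E0 : 0 <= E := phi_ge0 Hphi e.
have P0 : 0 <= P := phi_ge0 Hphi p.
move: hp hc1 hmix; rewrite -/Cc -/P -/E => hp hc1 hmix.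
set F1 := phi B - phi A.
have F1le : F1 <= M2 * E * P.
  apply: le_trans hmix; rewrite /F1 /Mix /B /A.
  have h2 := ler_norm (- (phi (u + e + p) - phi (u + e) - phi (u + p) + phi u)).
  rewrite normrN in h2.
  move: hc2 h2.
  move: (phi (u + e + p)) (phi (u + e)) (phi (u + p)) (phi u)
        `|phi (u + e + p) - phi (u + e) - phi (u + p) + phi u| => a b c d z h1 h2.
  lra.
have F1ge : 0 <= F1.
  have h := phi_convex A B (ltW mu0) (ltW mu1).
  rewrite -CcE in h.
  move: h hc1; rewrite /F1 -/A -/Cc.
  move: (phi Cc) (phi A) (phi B) => c a b h1 h2.
  nra.
have hcv := Hconv A B (ltW mu0) (ltW mu1).
rewrite /= -CcE in hcv.
have hk := eucl_comb A B mu; rewrite -CcE in hk.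
have hcs := CS' A B.
have hA := eucl_le A; have hB := eucl_le B; have hC := eucl_le Cc.
have a0 := eucl_ge0 A; have b0 := eucl_ge0 B; have c0 := eucl_ge0 Cc.
have pB : phi B <= 3 * t + 1.
  have := phiD Hphi u p; rewrite -/B -/P; case/andP: hu => _ hu2.
  move: (phi B) (phi u) hp hu2 => x y h1 h2 h3; lra.
have pC : phi Cc <= 3 * t + 1.
  have := phiD Hphi u (mu *: p); rewrite (phiZ Hphi) (gtr0_norm mu0) -/Cc -/P.
  case/andP: hu => _ hu2.
  have : mu * P <= P by rewrite ler_piMl // ltW.
  move: (phi Cc) (phi u) hp hu2 => x y h1 h2 h3 h4; lra.
have pA : phi A <= t by case/andP: hu.
have pA' : s <= phi A by case/andP: hu.
have step2 : 2 * gamma * m0 * (eucl A * eucl B - dot A B) <= F1 * Dn.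
  have hcA : phi A <= phi Cc by [].
  rewrite /F1 /Dn.
  move: hcv hk hcs hA hB hC a0 b0 c0 pA pB pC hcA F1ge.
  rewrite /F1.
  move: (eucl A) (eucl B) (eucl Cc) (dot A B) (phi A) (phi B) (phi Cc) => a b c k pa pb pc.
  move=> hcv hk hcs hA hB hC a0 b0 c0 pA pB pC hcA F1ge.
  set D := (1 - mu) * a + mu * b - c.
  set den := (1 - mu) * a + mu * b + c.
  have i1 : gamma * D <= mu * (pb - pa) by rewrite /D; nra.
  have i2 : D * den = 2 * mu * (1 - mu) * (a * b - k).
    have e1 : D * den = ((1 - mu) * a + mu * b) ^+ 2 - c ^+ 2.
      rewrite /D /den. ring.
    rewrite e1 hk; ring.
  have den0 : 0 <= den by rewrite /den; nra.
  have i3 : den <= (7 * t + 2) / gamma.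
    rewrite /den ler_pdivlMr //.
    have : gamma * a <= pa by rewrite mulrC -ler_pdivlMr.
    have : gamma * b <= pb by rewrite mulrC -ler_pdivlMr.
    have : gamma * c <= pc by rewrite mulrC -ler_pdivlMr.
    move=> h1 h2 h3.
    have h4 : (1 - mu) * a + mu * b + c <= a + b + c by nra.
    apply: le_trans (_ : (a + b + c) * gamma <= _).
      by rewrite ler_pM2r.
    lra.
  have X0 : 0 <= a * b - k by rewrite subr_ge0.
  have i4 : gamma * (D * den) <= mu * (pb - pa) * ((7 * t + 2) / gamma).
    rewrite [gamma * _]mulrA; apply: le_trans (ler_wpM2r den0 i1) _.
    by apply: ler_wpM2l => //; rewrite mulr_ge0 // ltW.
  rewrite i2 in i4.
  have i5 : 2 * gamma * (1 - mu) * (a * b - k) <= (pb - pa) * ((7 * t + 2) / gamma).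
    rewrite -(ler_pM2l mu0); move: i4; move: ((7 * t + 2) / gamma) => z; nra.
  apply: le_trans i5.
  apply: (ler_wpM2r X0); apply: (ler_wpM2l _ mum0).
  by rewrite mulr_ge0 // ltW.
have Apos : 0 < eucl A.
  have := phi_le_C1 A; have := C1_gt0.
  move: (eucl A) (phi A) C1 pA' => aa ppa cc h1 h2 h3.
  have : 0 < cc * aa by apply: lt_le_trans h3; apply: lt_le_trans h1.
  by rewrite pmulr_rgt0.
have An0 : eucl A != 0 by rewrite gt_eqF.
set kap := eucl B / eucl A.
have kap0 : 0 <= kap by apply: divr_ge0.
have hproj := @eucl_proj R n A B An0.
have hl := phi_lipA Hphi B (kap *: A).
rewrite (phiZ Hphi) (ger0_norm kap0) in hl.
have hc := phi_le_C1 (B - kap *: A).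
have ep0 := eucl_ge0 (B - kap *: A).
have sq1 : (phi B - kap * phi A) ^+ 2 <= C1 ^+ 2 * (2 * kap * (eucl A * eucl B - dot A B)).
  rewrite -/kap in hproj; rewrite -hproj -exprMn.
  by apply: sq_le; apply: le_trans hl hc.
have sq2 : gamma ^+ 2 * (eucl B - eucl A) ^+ 2 <= (kap * phi A - phi A) ^+ 2.
  have e1 : kap * phi A - phi A = (eucl B - eucl A) * (phi A / eucl A).
    by rewrite /kap; field.
  rewrite e1 -exprMn -[X in _ <= X]real_normK ?num_real //; apply: sq_le.
  rewrite !normrM (gtr0_norm gamma0) mulrC ler_wpM2l //.
  have pA0 : 0 < phi A by apply: lt_le_trans pA'.
  rewrite normfV (gtr0_norm pA0) (gtr0_norm Apos).
  by rewrite ler_pdivlMr // mulrC -ler_pdivlMr.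
have kapK : kap <= K0.
  have bB : eucl B <= (3 * t + 1) / gamma.
    by apply: le_trans hB _; rewrite ler_pM2r ?invr_gt0.
  have sa : s <= C1 * eucl A by apply: le_trans pA' (phi_le_C1 A).
  have ai : (eucl A)^-1 <= C1 / s.
    by rewrite -(ler_pM2r Apos) mulVf // mulrAC ler_pdivlMr // mul1r.
  apply: le_trans (_ : (3 * t + 1) / gamma * (C1 / s) <= _).
    by apply: ler_pM => //; rewrite invr_ge0 ltW.
  rewrite /K0 le_eqVlt; apply/orP; left; apply/eqP.
  by field; rewrite gt_eqF // gt_eqF.
have hd := eucl_diff A B.
have BAp : B - A = p by apply/rowP => q; rewrite !mxE; ring.
rewrite BAp in hd.
have hPp := phi_le_C1 p; rewrite -/P in hPp.
have epp0 := eucl_ge0 p.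
have X0 : 0 <= eucl A * eucl B - dot A B by rewrite subr_ge0.
have hPp2 : P ^+ 2 <= C1 ^+ 2 * eucl p ^+ 2.
  by rewrite -exprMn; apply: sq_le; rewrite ger0_norm.
rewrite /alpha /beta.
have C10 := C1_gt0.
have K00 : 0 <= K0 by apply: le_trans kapK.
have t0 : 0 < t := lt_le_trans s0 st.
have Dn0 : 0 <= Dn.
  rewrite /Dn; apply: divr_ge0; last exact: ltW.
  by rewrite addr_ge0 // mulr_ge0 // ltW.
rewrite /KX.
by apply: (final_alg gamma0 m00 M20 F1le F1ge step2 sq1 sq2 kapK hd hPp2 X0 kap0 Dn0 C10 P0 E0).
Qed.
Lemma alpha_ge0 M2 : 0 <= M2 -> 0 <= alpha M2.
Proof.
move=> M20.
have t0 : 0 < t := lt_le_trans s0 st.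
have lam0 : 0 < lam by apply: lt_trans lam1.
have m00 : 0 < m0 by rewrite /m0 subr_gt0 invf_lt1.
have K00 : 0 <= K0.
  rewrite /K0; apply: divr_ge0; last by rewrite mulr_ge0 // ltW.
  have := C1_gt0 => c10.
  apply: mulr_ge0; first exact: ltW.
  by rewrite addr_ge0 // mulr_ge0 // ltW.
have Dn0 : 0 <= Dn.
  rewrite /Dn; apply: divr_ge0; last exact: ltW.
  by rewrite addr_ge0 // mulr_ge0 // ltW.
have KX0 : 0 <= KX.
  rewrite /KX; apply: addr_ge0 => //; apply: divr_ge0; last exact: sqr_ge0.
  by apply: mulr_ge0 => //; apply: mulr_ge0 => //; apply: sqr_ge0.
rewrite /alpha; apply: divr_ge0; last by rewrite !mulr_ge0 // ltW.
by apply: mulr_ge0 => //; apply: mulr_ge0 => //; apply: mulr_ge0 => //; apply: sqr_ge0.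
Qed.

Lemma beta_ge0 M2 : 0 <= beta M2.
Proof. rewrite /beta; apply: divr_ge0; last exact: sqr_ge0.
by apply: mulr_ge0; [apply: mulr_ge0 => //; apply: sqr_ge0 | apply: sqr_ge0]. Qed.

Lemma core : exists d0 G0 : R, [/\ 0 < d0, d0 <= 1 &
  forall (u e p : V) (mu : R), s <= phi u <= t -> phi e <= d0 -> phi p <= 2 * t + 1 ->
    0 < mu -> mu <= lam^-1 -> phi u <= phi (u + mu *: p) ->
    phi (u + e + p) <= phi (u + e) -> phi p <= G0 * phi e].
Proof.
have [eta [M2 [eta0 M20 hmix]]] := mix_ext Hphi HC2 gamma0 Hconv t s0.
have b0 := beta_ge0 M2.
have bp : 0 < 2 * beta M2 + 2 by move: b0; move: (beta M2) => b hb; lra.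
have bi0 : 0 < (2 * beta M2 + 2)^-1 by rewrite invr_gt0.
have bi1 : (2 * beta M2 + 2)^-1 <= 1.
  rewrite invf_le1 //; move: b0; move: (beta M2) => b hb; lra.
exists (Num.min eta (2 * beta M2 + 2)^-1), (2 * alpha M2); split.
- by rewrite lt_min eta0.
- by rewrite ge_min bi1 orbT.
move=> u e p mu hu he hp mu0 mul hc1 hc2.
have he1 : phi e <= eta by apply: le_trans he _; rewrite ge_min lexx.
have he2 : phi e <= (2 * beta M2 + 2)^-1 by apply: le_trans he _; rewrite ge_min lexx orbT.
apply: (@final_step _ (phi p) (phi e) (alpha M2) (beta M2)); rewrite ?phi_ge0 ?alpha_ge0 //.
exact: (core_step M20 hu hp mu0 mul hc1 hc2 (hmix u e p hu he1)).
Qed.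

End Core2.

Section Geo.
Variables (R : realType) (n : nat).
Local Notation V := 'rV[R]_n.
Variable phi : V -> R.
Hypothesis Hphi : is_norm phi.

Lemma delta_le (K : set V) (x y : V) : K y -> delta phi K x <= phi (y - x).
Proof.
move=> Ky; apply: (ge_inf _); last by exists y.
by exists 0 => _ [y' _ <-]; apply: phi_ge0.
Qed.

End Geo.

Unset Implicit Arguments.

Theorem corollary3p10 (R : realType) (n : nat) (phi : 'rV[R]_n -> R)
  (s t l : R) :
  is_norm phi -> uniformly_convex phi -> C2_off0 phi ->
  0 < s -> s < t -> 1 < l ->
  exists Gamma : R,
    forall K : set 'rV[R]_n, closed K ->
    forall a b y z : 'rV[R]_n,
      Klst phi K l s t a ->
      delta phi K b <= t ->
      xi phi K b y ->
      xi phi K a z ->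
      phi (z - y) <= Gamma * phi (a - b).
Proof.
move=> Hphi [gamma [gamma0 Hconv]] HC2 s0 st l1.
have st' : s <= t := ltW st.
have t0 : 0 < t := lt_trans s0 st.
set lam := (1 + l) / 2.
have lam1 : 1 < lam by rewrite /lam; lra.
have laml : lam < l by rewrite /lam; lra.
have [d0 [G0 [d00 d01 hcore]]] := core Hphi HC2 gamma0 Hconv s0 st' lam1.
set Gamma := Num.max G0 (2 * t / d0 + 1).
have main : forall K a b y, Klst phi K l s t a -> delta phi K b <= t -> xi phi K b y ->
    (exists z, xi phi K a z) -> phi (y - xget 0 (xi phi K a)) <= Gamma * phi (a - b).
  move=> K a b y [hrho [hs ht]] hb [Ky hy] hz.
  have [Kw hw] := xgetPex 0 hz.
  move: hrho; rewrite /rho /=.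
  move: Kw hw; set w := xget 0 (xi phi K a) => Kw hw hrho.
  have hlam : (lam%:E < l%:E)%E by rewrite lte_fin.
  have := lt_le_trans hlam hrho.
  case/ereal_sup_gt => yy [s' hs' hE] lams'.
  rewrite -hE lte_fin in lams'.
  have s'0 : 0 < s' by apply: lt_trans lams'; apply: lt_trans lam1.
  have s'n0 : s' != 0 by rewrite gt_eqF.
  have hs'' : delta phi K (w + s' *: (a - w)) = s' * delta phi K a := hs'.
  have hw' : phi (a - w) = delta phi K a := hw.
  have hy' : phi (b - y) = delta phi K b := hy.
  have hu : s <= phi (w - a) <= t by rewrite (phiB Hphi) hw' hs ht.
  have h1 : phi (w - a) <= phi (w - a + s'^-1 *: (y - w)).
    have := delta_le Hphi (w + s' *: (a - w)) Ky; rewrite hs''.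
    have -> : w - a + s'^-1 *: (y - w) = s'^-1 *: (y - (w + s' *: (a - w))).
      apply/rowP => q; rewrite !mxE; field; done.
    have si0 : 0 < s'^-1 by rewrite invr_gt0.
    rewrite (phiZ Hphi) (phiB Hphi w a) hw' (gtr0_norm si0).
    move=> h; rewrite -(ler_pM2l s'0) mulrA mulfV // mul1r; exact: h.
  have h2 : phi (w - a + (a - b) + (y - w)) <= phi (w - a + (a - b)).
    have -> : w - a + (a - b) + (y - w) = - (b - y) by apply/rowP => q; rewrite !mxE; ring.
    have -> : w - a + (a - b) = w - b by apply/rowP => q; rewrite !mxE; ring.
    by rewrite (phiN Hphi) hy'; apply: delta_le.
  have hp : phi (y - w) <= 2 * t + phi (a - b).
    have -> : y - w = - (b - y) + (b - a) + (a - w) by apply/rowP => q; rewrite !mxE; ring.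
    apply: le_trans (phiD Hphi _ _) _; apply: le_trans (lerD (phiD Hphi _ _) (lexx _)) _.
    rewrite (phiN Hphi) hy' hw' (phiB Hphi b a).
    move: hb ht; move: (delta phi K b) (delta phi K a) (phi (a - b)) => x1 x2 x3; lra.
  have d0' : 0 <= phi (a - b) := phi_ge0 Hphi _.
  have G0G : G0 <= Gamma by rewrite /Gamma le_max lexx.
  have G1G : 2 * t / d0 + 1 <= Gamma by rewrite /Gamma le_max lexx orbT.
  have [hd|hd] := leP (phi (a - b)) d0.
    have hc := hcore (w - a) (a - b) (y - w) s'^-1 hu hd.
    have hp1 : phi (y - w) <= 2 * t + 1 by apply: le_trans hp _; rewrite lerD2l; apply: le_trans hd d01.
    have mu0 : 0 < s'^-1 by rewrite invr_gt0.
    have mul : s'^-1 <= lam^-1.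
      rewrite lef_pV2 ?posrE ?ltW //; apply: lt_trans lam1 => //.
    apply: le_trans (hc hp1 mu0 mul h1 h2) _.
    by apply: ler_wpM2r.
  apply: le_trans hp _; apply: le_trans (_ : (2 * t / d0 + 1) * phi (a - b) <= _); last first.
    by apply: ler_wpM2r.
  have k1 : 1 <= phi (a - b) / d0 by rewrite ler_pdivlMr // mul1r ltW.
  have k2 : 2 * t <= 2 * t * (phi (a - b) / d0).
    by rewrite ler_peMr // mulr_ge0 // ltW.
  have -> : (2 * t / d0 + 1) * phi (a - b) = 2 * t * (phi (a - b) / d0) + phi (a - b).
    by rewrite mulrDl mul1r mulrAC -mulrA.
  move: k2; move: (2 * t * (phi (a - b) / d0)) => x1 k2; lra.
exists Gamma => K _ a b y z ha hb hy hz.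
have hz' : exists z, xi phi K a z by exists z.
have m1 := main K a b y ha hb hy hz'.
have [_ [_ hta]] := ha.
have m2 := main K a a z ha hta hz hz'.
rewrite subrr (phi0 Hphi) mulr0 in m2.
have zw : z = xget 0 (xi phi K a).
  apply/eqP; rewrite -subr_eq0; apply/eqP; apply: (phi_eq0 Hphi).
  by apply/eqP; rewrite eq_le m2 phi_ge0.
by rewrite zw (phiB Hphi).
Qed.
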